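(* Let $\lambda=(\lambda_i)\in\{0,\dots,l-1\}^n$ and $v\in V^0_\varepsilon(\lambda)$. (a) $E_iv=0$ for all $i\in I$ if and only if $v\in\mathbb Cv(0)$. (b) $F_iv=0$ for all $i\in I$ if and only if $v\in\mathbb Cv(m^\lambda)$, where $m^\lambda=(m^\lambda_{ij})_{1\le i\le j\le n}\in\{0,\dots,l-1\}^N$ is defined by $m^\lambda_{ij}\equiv\sum_{k=1}^i\lambda_{j-k+1}\pmod l$.
   Context: $n\ge1$, $I=\{1,\dots,n\}$, $N=n(n+1)/2$; $l>2$ odd, $\gcd(l,n+1)=1$, $\varepsilon$ a primitive $l$-th root of unity; $[c]_\varepsilon=(\varepsilon^c-\varepsilon^{-c})/(\varepsilon-\varepsilon^{-1})$ for $c\in\mathbb Z$. $U_\varepsilon$: the $\mathbb C$-algebra generated by $E_i,F_i,K_\mu$ ($i\in I$, $\mu$ in the root lattice of $\mathfrak{sl}_{n+1}$) with the relations of $U_q(\mathfrak{sl}_{n+1})$ at $q=\varepsilon$. $V^0_\varepsilon(\lambda)$: vector space with basis $v(m)$, $m=(m_{ij})_{1\le i\le j\le n}\in\{0,\dots,l-1\}^N$, with $v(m+lm')=v(m)$ ($m'\in\mathbb Z^N$); $\epsilon_{ij}$ unit vectors; $\alpha_{i,j}=\sum_{k=j+1}^i\epsilon_{k-1,n-i+k}-\sum_{k=j}^i\epsilon_{k,n-i+k}$ ($j\le i$); for $c\in\mathbb Z^N$ ($c_{ij}=0$ outside range) $M_{i,j}(c)=\sum_{k=i-1}^{j-1}(c_{i,k}-c_{i-1,k})+\sum_{k=i}^j(c_{i,k}-c_{i+1,k})$,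 $N_{i,j}(c)=c_{j-1,n-i+j}-c_{j,n-i+j}$, $\mu_i(c)=\sum_{k=i-1}^nc_{i-1,k}-2\sum_{k=i}^nc_{i,k}+\sum_{k=i+1}^nc_{i+1,k}$. It is the $U_\varepsilon$-module (Schnizer module with all $a_{ij}=1$, $b_{ij}=0$) with $E_iv(m)=\sum_{j=1}^i[N_{i,j}(m)]_\varepsilon v(m+\alpha_{i,j})$, $F_iv(m)=\sum_{j=i}^n[M_{i,j}(m)-\lambda_i]_\varepsilon v(m+\epsilon_{i,j})$, $K_{\alpha_i}v(m)=\varepsilon^{\mu_i(m)+\lambda_i}v(m)$. *)

(* Defs.v *)
From HB Require Import structures.
From mathcomp Require Import all_boot all_order all_algebra.
From mathcomp Require Import algC.
Set Implicit Arguments. Unset Strict Implicit. Unset Printing Implicit Defensive.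
Import Order.TTheory GRing.Theory Num.Theory.
Local Open Scope ring_scope.

(* Index pairs (i,j) with 1 <= i <= j <= n, stored 0-based as (i-1, j-1). *)
Notation Pn n := {p : 'I_n * 'I_n | (p.1 <= p.2)%N}.

(* Basis labels m in {0,...,l-1}^N, i.e. (Z/lZ)^N  (l > 2 assumed where used). *)
Notation Blab n l := {ffun Pn n -> 'Z_l}.

(* The vector space V^0_eps(lambda): coordinates w.r.t. the basis v(m). *)
Notation Vsp n l := {ffun Blab n l -> algC^o}.

Definition bvec n l (m : Blab n l) : Vsp n l := [ffun m' => (m' == m)%:R].

(* entries m_{ij} (1-based) as integers in {0..l-1}; 0 outside 1<=i<=j<=n *)
Definition mval n l (m : Blab n l) (i j : nat) : int :=
  \sum_(p : Pn n | ((val p).1.+1 == i) && ((val p).2.+1 == j)) (val (m p))%:Z.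

(* m + d (reduced mod l), for d : Z^N given as a 1-based function *)
Definition mshift n l (m : Blab n l) (d : nat -> nat -> int) : Blab n l :=
  [ffun p => m p + (d (val p).1.+1 (val p).2.+1)%:~R].

Definition unitv (a b : nat) : nat -> nat -> int :=
  fun i j => ((i == a) && (j == b))%:R.

Definition alpha (n i j : nat) : nat -> nat -> int := fun a b =>
  \sum_(j.+1 <= k < i.+1) unitv (predn k) (n - i + k)%N a b
  - \sum_(j <= k < i.+1) unitv k (n - i + k)%N a b.

Definition Mij (n : nat) (c : nat -> nat -> int) (i j : nat) : int :=
  \sum_(predn i <= k < j) (c i k - c (predn i) k) + \sum_(i <= k < j.+1) (c i k - c i.+1 k).

Definition Nij (n : nat) (c : nat -> nat -> int) (i j : nat) : int :=
  c (predn j) (n - i + j)%N - c j (n - i + j)%N.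

Definition qint (eps : algC) (c : int) : algC :=
  (eps ^ c - eps ^ (- c)) / (eps - eps^-1).

(* E_i and F_i on V^0_eps(lambda) (lambda given 1-based) *)
Definition Eop n l (eps : algC) (i : nat) (v : Vsp n l) : Vsp n l :=
  \sum_(m : Blab n l) v m *:
     \sum_(1 <= j < i.+1) qint eps (Nij n (mval m) i j) *: bvec (mshift m (alpha n i j)).

Definition Fop n l (eps : algC) (lam : nat -> nat) (i : nat) (v : Vsp n l) : Vsp n l :=
  \sum_(m : Blab n l) v m *:
     \sum_(i <= j < n.+1)
        qint eps (Mij n (mval m) i j - (lam i)%:Z) *: bvec (mshift m (unitv i j)).

Definition mlam n l (lam : nat -> nat) : Blab n l :=
  [ffun p : Pn n => (((\sum_(1 <= k < ((val p).1.+1).+1) lam ((val p).2.+1 - k).+1)%N)%:R : 'Z_l)].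

(* Main.v *)
Require Import Defs.
From HB Require Import structures.
From mathcomp Require Import all_boot all_order all_algebra.
From mathcomp Require Import algC.
From mathcomp Require Import ring zify.
Import Order.TTheory GRing.Theory Num.Theory.
Set Implicit Arguments. Unset Strict Implicit. Unset Printing Implicit Defensive.
Local Open Scope ring_scope.

Lemma Zl_nat_eq0 (l k : nat) : (1 < l)%N -> ((k%:R : 'Z_l) == 0) = (l %| k)%N.
Proof.
move=> hl; rewrite -val_eqE /= val_Zp_nat //.
Qed.

Lemma Zl_int_eq0 (l : nat) (c : int) : (1 < l)%N -> ((c%:~R : 'Z_l) == 0) = (l %| `|c|)%N.
Proof.
move=> hl; case: c => k /=; first by rewrite Zl_nat_eq0.
by rewrite NegzE mulrNz oppr_eq0 Zl_nat_eq0.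
Qed.

Lemma qint0 (l : nat) (eps : algC) (c : int) :
  (2 < l)%N -> odd l -> l.-primitive_root eps ->
  (qint eps c == 0) = ((c%:~R : 'Z_l) == 0).
Proof.
move=> hl ol pe.
have l1 : (1 < l)%N by apply: ltn_trans hl.
have e0 : eps != 0.
  apply/negP=> /eqP e0; have := prim_expr_order pe; rewrite e0 expr0n.
  by case: l hl {l1 pe ol} => // l' _ /=; move/eqP; rewrite eq_sym oner_eq0.
have eu : eps \is a GRing.unit by rewrite unitfE.
have den : eps - eps^-1 != 0.
  rewrite subr_eq0; apply/negP => /eqP h.
  have : eps ^+ 2 == 1 by rewrite expr2 {2}h mulrV.
  by rewrite -(prim_order_dvd pe) => /(dvdn_leq (isT : (0 < 2)%N)); rewrite leqNgt hl.
have cop : coprime l 2 by rewrite coprimen2.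
rewrite /qint mulf_eq0 invr_eq0 (negbTE den) orbF subr_eq0 Zl_int_eq0 //.
case: c => k.
- rewrite -exprnN -exprnP.
  apply/idP/idP => [/eqP h|h].
    have : eps ^+ (k * 2) == 1.
      by rewrite exprM expr2 {2}h mulrV // unitrX.
    by rewrite -(prim_order_dvd pe) Gauss_dvdl.
  move: h; rewrite (prim_order_dvd pe) => /eqP ->; by rewrite invr1.
- have -> : `|Negz k|%N = k.+1 by [].
  rewrite NegzE opprK -exprnN -exprnP.
  apply/idP/idP => [/eqP h|h].
    have : eps ^+ (k.+1 * 2) == 1.
      by rewrite exprM expr2 -{1}h mulVr // unitrX.
    by rewrite -(prim_order_dvd pe) Gauss_dvdl.
  move: h; rewrite (prim_order_dvd pe) => /eqP ->; by rewrite invr1.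
Qed.
Lemma sep n l (v : Vsp n l) (J : seq nat) (f : Blab n l -> nat -> Blab n l)
  (c : Blab n l -> nat -> algC) :
  uniq J ->
  \sum_m v m *: \sum_(j <- J) c m j *: bvec (f m j) = 0 ->
  (forall m1 m2 j1 j2, v m1 != 0 -> v m2 != 0 -> j1 \in J -> j2 \in J ->
     f m1 j1 = f m2 j2 -> m1 = m2 /\ j1 = j2) ->
  forall m j, v m != 0 -> j \in J -> c m j = 0.
Proof.
move=> uJ H hinj m j vm jJ.
have := congr1 (fun w : Vsp n l => w (f m j)) H.
rewrite /= ffunE sum_ffunE (bigD1 m) //= [X in _ + X]big1 ?addr0; last first.
  move=> m2 m2m; have [->|v2] := eqVneq (v m2) 0; first by rewrite scale0r ffunE.
  rewrite ffunE sum_ffunE big1_seq ?scaler0 // => j2 /= j2J.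
  rewrite !ffunE; case: eqP => [e|]; last by rewrite scaler0.
  by have [] := hinj _ _ _ _ vm v2 jJ j2J e; move: m2m => /eqP; congruence.
rewrite ffunE sum_ffunE (bigD1_seq j) //= [X in _ + X]big1_seq ?addr0; last first.
  move=> j2 /andP[j2j j2J]; rewrite !ffunE; case: eqP => [e|]; last by rewrite scaler0.
  by have [] := hinj _ _ _ _ vm vm jJ j2J e; move: j2j => /eqP; congruence.
rewrite !ffunE eqxx /= => /eqP; rewrite scaler_eq0 (negbTE vm) /= scaler_eq0 oner_eq0 orbF.
by move/eqP.
Qed.

Definition valid (n a b : nat) := [&& (0 < a)%N, (a <= b)%N & (b <= n)%N].

Lemma mval_p n l (m : Blab n l) (p : Pn n) :
  mval m (val p).1.+1 (val p).2.+1 = (val (m p))%:Z.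
Proof.
rewrite /mval (big_pred1 p) // => q /=.
Qed.

Lemma valid_p n (p : Pn n) : valid n (val p).1.+1 (val p).2.+1.
Proof. by case: p => [[a b]] /= h; rewrite /valid /= ltnS h ltn_ord. Qed.

Lemma mval_inv n l (m : Blab n l) a b : ~~ valid n a b -> mval m a b = 0.
Proof.
move=> hv; rewrite /mval big_pred0 // => p; apply/negP => /andP[/eqP ea /eqP eb].
by move: hv; rewrite -ea -eb valid_p.
Qed.

Lemma pos_ex n a b : valid n a b ->
  {p : Pn n | ((val p).1.+1 = a) /\ ((val p).2.+1 = b)}.
Proof.
case/and3P => a0 ab bn.
have ha : (a.-1 < n)%N by lia.
have hb : (b.-1 < n)%N by lia.
have hab : ((Ordinal ha, Ordinal hb).1 <= (Ordinal ha, Ordinal hb).2)%N by rewrite /=; lia.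
exists (exist _ (Ordinal ha, Ordinal hb) hab) => /=; lia.
Qed.

Definition ment n l (m : Blab n l) a b : 'Z_l := (mval m a b)%:~R.

Lemma ment_p n l (m : Blab n l) (p : Pn n) :
  ment m (val p).1.+1 (val p).2.+1 = m p.
Proof. by rewrite /ment mval_p -pmulrn natr_Zp. Qed.

Lemma ment_inv n l (m : Blab n l) a b : ~~ valid n a b -> ment m a b = 0.
Proof. by move=> h; rewrite /ment mval_inv. Qed.

Lemma ment_shift n l (m : Blab n l) d a b : valid n a b ->
  ment (mshift m d) a b = ment m a b + (d a b)%:~R.
Proof.
move=> /pos_ex [p [<- <-]].
by rewrite !ment_p /mshift ffunE.
Qed.

Lemma ment_ext n l (m1 m2 : Blab n l) : (forall a b, valid n a b -> ment m1 a b = ment m2 a b) -> m1 = m2.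
Proof.
move=> h; apply/ffunP => p; rewrite -!ment_p; apply: h; exact: valid_p.
Qed.

Lemma ment0 n l a b : ment (0 : Blab n l) a b = 0.
Proof.
have [v|v] := boolP (valid n a b); last by rewrite ment_inv.
case: (pos_ex v) => p [<- <-]; rewrite ment_p ffunE //.
Qed.

Lemma mval0 n l a b : mval (0 : Blab n l) a b = 0.
Proof. by rewrite /mval big1 // => p _; rewrite ffunE. Qed.


Lemma sum_ind (lo hi x : nat) (q : bool) :
  \sum_(lo <= k < hi) (((k == x) && q)%:R : int) = (((lo <= x < hi)%N) && q)%:R.
Proof.
case: q; last by rewrite andbF big1 // => k _; rewrite andbF.
rewrite !andbT; elim: hi => [|hi IH]; first by rewrite big_geq // ltn0 andbF.
case: (leqP lo hi) => h.
  rewrite big_nat_recr //= IH.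
  have [xh|xh|xh] := ltngtP x hi; rewrite /= ?andbT ?addr0 ?add0r.
  - by rewrite (ltn_trans xh (ltnSn hi)) andbT.
  - by rewrite andbF ltnS (leqNgt x hi) xh andbF.
  - by rewrite andbF add0r xh ltnSn andbT h.
rewrite big_geq //; case: (leqP lo x) => hx //=.
by rewrite ltnNge (leq_trans h hx).
Qed.

Lemma alphaE n i j a b : alpha n i j a b =
  ((b == a.+1 + (n - i)%N)%N && (j <= a < i)%N)%:R
  - ((b == a + (n - i)%N)%N && (j <= a <= i)%N)%:R.
Proof.
rewrite /alpha /unitv.
rewrite (eq_big_nat _ _ (F2 := fun k => ((k == a.+1) && (b == a.+1 + (n - i)%N)%N)%:R)); last first.
  move=> k /andP[hk _]; congr (_%:R).
  case: k hk => // k _ /=; rewrite eqSS eq_sym.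
  by case: eqP => // ->; rewrite addnC.
rewrite sum_ind.
rewrite (eq_big_nat _ _ (F2 := fun k => ((k == a) && (b == a + (n - i)%N)%N)%:R)); last first.
  move=> k _; congr (_%:R); rewrite eq_sym.
  by case: eqP => // ->; rewrite addnC.
rewrite sum_ind !ltnS; congr (_%:R - _%:R); rewrite andbC // andbA.
Qed.

Lemma Mij_low n (c : nat -> nat -> int) i k :
  (forall b, c i.+1 b = 0) -> (forall b, c i.+2 b = 0) ->
  Mij n c i.+1 k = - \sum_(i <= k' < k) c i k'.
Proof.
move=> h1 h2; rewrite /Mij /= [X in _ + X]big1 ?addr0; last by move=> k' _; rewrite h1 h2 subr0.
by rewrite sumrB big1 ?sub0r // => k' _; rewrite h1.
Qed.

Definition MZ l (c : nat -> nat -> 'Z_l) (i j : nat) : 'Z_l :=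
  \sum_(predn i <= k < j) (c i k - c (predn i) k) + \sum_(i <= k < j.+1) (c i k - c i.+1 k).

Lemma MZ_phi n l (c : nat -> nat -> int) i j :
  ((Mij n c i j)%:~R : 'Z_l) = MZ (fun a b => (c a b)%:~R) i j.
Proof.
rewrite /Mij /MZ intrD.
by congr (_ + _); rewrite (big_morph _ (@intrD _) (mulr0z _)); apply: eq_bigr => k _; rewrite intrB.
Qed.

Lemma MZ_lin l (c1 c2 e : nat -> nat -> 'Z_l) i j :
  (forall a b, c2 a b = c1 a b + e a b) -> MZ c2 i j = MZ c1 i j + MZ e i j.
Proof.
move=> h; rewrite /MZ.
have -> : \sum_(i.-1 <= k < j) (c2 i k - c2 i.-1 k) =
   \sum_(i.-1 <= k < j) (c1 i k - c1 i.-1 k) + \sum_(i.-1 <= k < j) (e i k - e i.-1 k).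
  by rewrite -big_split; apply: eq_bigr => k _; rewrite !h opprD addrACA.
have -> : \sum_(i <= k < j.+1) (c2 i k - c2 i.+1 k) =
   \sum_(i <= k < j.+1) (c1 i k - c1 i.+1 k) + \sum_(i <= k < j.+1) (e i k - e i.+1 k).
  by rewrite -big_split; apply: eq_bigr => k _; rewrite !h opprD addrACA.
by rewrite addrACA.
Qed.

Lemma MZ_base l (c : nat -> nat -> 'Z_l) i : (0 < i)%N ->
  MZ c i i = c i i - c i.-1 i.-1 + (c i i.-1 - c i.+1 i).
Proof.
case: i => // i _; rewrite /MZ /= big_nat1.
rewrite big_nat_recr //= big_geq //; ring.
Qed.

Lemma MZ_step l (c : nat -> nat -> 'Z_l) i j : (0 < i)%N -> (i <= j)%N ->
  MZ c i j.+1 = MZ c i j + (c i j - c i.-1 j) + (c i j.+1 - c i.+1 j.+1).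
Proof.
move=> i0 ij; rewrite /MZ big_nat_recr /=; last by rewrite (leq_trans (leq_pred i) ij).
rewrite [in LHS]big_nat_recr /=; last by rewrite (leq_trans ij).
ring.
Qed.

Lemma Zl10 l : (1 < l)%N -> ((1 : 'Z_l) != 0).
Proof. by move=> _; apply: oner_neq0. Qed.

Lemma mshift_inj n l (m1 m2 : Blab n l) d : mshift m1 d = mshift m2 d -> m1 = m2.
Proof.
move=> e; apply/ffunP => p; have := congr1 (fun w : Blab n l => w p) e; rewrite /mshift !ffunE.
exact: addIr.
Qed.

Lemma E_coll n l (m1 m2 : Blab n l) i t j1 j2 :
  (2 < l)%N -> i = t.+1 -> (i <= n)%N ->
  (forall m, m = m1 \/ m = m2 -> forall a b, valid n a b -> (n - t <= b - a)%N -> ment m a b = 0) ->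
  (1 <= j1)%N -> (j1 < j2)%N -> (j2 <= i)%N ->
  mshift m1 (alpha n i j1) = mshift m2 (alpha n i j2) -> False.
Proof.
move=> hl -> hi hz h1 h12 h2 e.
have v : valid n j1 (j1.+1 + (n - t.+1)) by rewrite /valid; lia.
have := congr1 (fun w : Blab n l => ment w j1 (j1.+1 + (n - t.+1))) e.
have z1 := hz m1 (or_introl erefl) _ _ v ltac:(lia).
have z2 := hz m2 (or_intror erefl) _ _ v ltac:(lia).
rewrite /= !ment_shift // z1 z2 !add0r !alphaE eqxx /=.
have -> : (j1.+1 + (n - t.+1) == j1 + (n - t.+1))%N = false by apply/negbTE/eqP; lia.
have -> : (j2 <= j1)%N = false by rewrite leqNgt h12.
rewrite leqnn /= subr0 (_ : (j1 < t.+1)%N) /=; last by lia.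
by move/eqP; rewrite oner_eq0.
Qed.

Lemma partA n l eps (v : Vsp n l) : (2 < l)%N -> odd l -> l.-primitive_root eps ->
  (forall i, (1 <= i <= n)%N -> Eop eps i v = 0) -> forall m, v m != 0 -> m = 0.
Proof.
move=> hl ol pe hE.
suff H : forall t, (t <= n)%N -> forall m, v m != 0 -> forall a b, valid n a b ->
    (n - t <= b - a)%N -> ment m a b = 0.
  move=> m vm; apply: ment_ext => a b vab; rewrite ment0; apply: (H n) => //; lia.
elim=> [|t IH] tn m vm a b vab hd.
  by exfalso; move: vab hd; rewrite /valid; lia.
have IH' := IH (ltnW tn).
pose i := t.+1.
have hsep := @sep n l v (index_iota 1 i.+1) (fun m j => mshift m (alpha n i j))
  (fun m j => qint eps (Nij n (mval m) i j)) (iota_uniq _ _) (hE i ltac:(lia)).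
have hc : forall m1 m2 j1 j2, v m1 != 0 -> v m2 != 0 -> j1 \in index_iota 1 i.+1 ->
    j2 \in index_iota 1 i.+1 -> mshift m1 (alpha n i j1) = mshift m2 (alpha n i j2) ->
    m1 = m2 /\ j1 = j2.
  move=> m1 m2 j1 j2 v1 v2; rewrite !mem_index_iota => /andP[a1 b1] /andP[a2 b2] e.
  have [j12|j21|j12] := ltngtP j1 j2.
  - exfalso; apply: (E_coll (m1:=m1) (m2:=m2) hl erefl tn _ a1 j12 _ e); last by lia.
    by move=> m' [->|->]; apply: IH'.
  - exfalso; apply: (E_coll (m1:=m2) (m2:=m1) hl erefl tn _ a2 j21 _ (esym e)); last by lia.
    by move=> m' [->|->]; apply: IH'.
  - by subst j2; split => //; apply: mshift_inj e.
have {}hsep := hsep hc.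
case: (leqP (n - t) (b - a)) => hd'; first exact: IH'.
have eb : b = (n - t.+1 + a)%N by move: vab hd hd'; rewrite /valid; lia.
have ja : a \in index_iota 1 i.+1 by rewrite mem_index_iota; move: vab hd hd'; rewrite /valid; lia.
have := hsep m a vm ja => /eqP; rewrite (qint0 _ hl ol pe) /Nij intrB.
rewrite -/(ment m _ _) -/(ment m _ _) eb.
have -> : ment m a.-1 (n - t.+1 + a) = 0.
  have [va|va] := boolP (valid n a.-1 (n - t.+1 + a)); last by rewrite ment_inv.
  apply: IH' => //; move: vab hd hd'; rewrite /valid; lia.
by rewrite sub0r oppr_eq0 => /eqP.
Qed.

Lemma unitv_inv n i j a b : valid n i j -> ~~ valid n a b -> unitv i j a b = 0.
Proof.
move=> v1 v2; rewrite /unitv; case: eqP => [ea|] //=; case: eqP => [eb|] //=.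
by move: v2; rewrite ea eb v1.
Qed.

Lemma Mij_unit n i j1 j2 k :
  Mij n (fun a b => unitv i j1 a b - unitv i j2 a b) i.+1 k =
  - (((i <= j1 < k)%N)%:R - ((i <= j2 < k)%N)%:R).
Proof.
rewrite Mij_low; last 2 first.
- by move=> b; rewrite /unitv (_ : (i.+1 == i) = false) ?subrr //; apply/negbTE; rewrite neq_ltn ltnSn orbT.
- by move=> b; rewrite /unitv (_ : (i.+2 == i) = false) ?subrr //; apply/negbTE; rewrite neq_ltn (ltn_trans (ltnSn i) (ltnSn i.+1)) orbT.
rewrite sumrB /unitv eqxx.
have E : forall x, \sum_(i <= k' < k) ((true && (k' == x))%:R : int) = ((i <= x < k)%N)%:R.
  move=> x; rewrite -[(i <= x < k)%N]andbT -sum_ind; apply: eq_bigr => kk _; by rewrite andbT.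
by rewrite !E.
Qed.

Lemma F_coll n l (m1 m2 : Blab n l) (lam : nat -> nat) i j1 j2 :
  (1 < l)%N -> (1 <= i)%N -> (i <= j1)%N -> (j1 < j2)%N -> (j2 <= n)%N ->
  (forall m, m = m1 \/ m = m2 ->
     ((Mij n (mval m) i.+1 j2 - (lam i.+1)%:Z)%:~R : 'Z_l) = 0) ->
  mshift m1 (unitv i j1) = mshift m2 (unitv i j2) -> False.
Proof.
move=> hl i1 ij1 j12 j2n hM e.
have v1 : valid n i j1 by rewrite /valid; lia.
have v2 : valid n i j2 by rewrite /valid; lia.
have hpt : forall a b, ment m2 a b = ment m1 a b +
    ((unitv i j1 a b - unitv i j2 a b)%:~R : 'Z_l).
  move=> a b; have [vab|vab] := boolP (valid n a b); last first.
    by rewrite !ment_inv // (unitv_inv v1 vab) (unitv_inv v2 vab) subrr addr0.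
  have := congr1 (fun w : Blab n l => ment w a b) e.
  rewrite /= !ment_shift // intrB => h.
  by rewrite addrA h addrK.
have := MZ_lin i.+1 j2 hpt.
rewrite -!(MZ_phi n) Mij_unit.
have -> : ((i <= j1 < j2)%N) by lia.
have -> : ((i <= j2 < j2)%N) = false by rewrite ltnn andbF.
have /eqP := hM m1 (or_introl erefl); rewrite intrB subr_eq0 => /eqP ->.
have /eqP := hM m2 (or_intror erefl); rewrite intrB subr_eq0 => /eqP ->.
rewrite -{1}[(lam i.+1)%:~R]addr0 => /addrI /esym /eqP.
by rewrite /= subr0 intrN oppr_eq0 oner_eq0.
Qed.

Lemma partB n l eps (lam : nat -> nat) (v : Vsp n l) : (2 < l)%N -> odd l -> l.-primitive_root eps ->
  (forall i, (1 <= i <= n)%N -> Fop eps lam i v = 0) ->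
  forall m, v m != 0 -> forall r k, (1 <= r)%N -> (r <= k <= n)%N ->
    ((Mij n (mval m) r k - (lam r)%:Z)%:~R : 'Z_l) = 0.
Proof.
move=> hl ol pe hF.
suff H : forall t, (t <= n)%N -> forall m, v m != 0 -> forall r k, (n - t < r)%N ->
    (r <= k <= n)%N -> ((Mij n (mval m) r k - (lam r)%:Z)%:~R : 'Z_l) = 0.
  move=> m vm r k r1 rk; apply: (H n) => //; lia.
elim=> [|t IH] tn m vm r k hr hk.
  by exfalso; move: hr hk; lia.
have IH' := IH (ltnW tn).
have hsep := @sep n l v (index_iota (n - t)%N n.+1) (fun m j => mshift m (unitv (n - t)%N j))
  (fun m j => qint eps (Mij n (mval m) (n - t)%N j - (lam (n - t)%N)%:Z)) (iota_uniq _ _)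
  (hF (n - t)%N ltac:(lia)).
have hc : forall m1 m2 j1 j2, v m1 != 0 -> v m2 != 0 -> j1 \in index_iota (n - t)%N n.+1 ->
    j2 \in index_iota (n - t)%N n.+1 ->
    mshift m1 (unitv (n - t)%N j1) = mshift m2 (unitv (n - t)%N j2) ->
    m1 = m2 /\ j1 = j2.
  move=> m1 m2 j1 j2 v1 v2; rewrite !mem_index_iota => /andP[a1 b1] /andP[a2 b2] e.
  have [j12|j21|j12] := ltngtP j1 j2.
  - exfalso; apply: (F_coll (m1:=m1) (m2:=m2) (lam := lam) (ltnW hl) _ a1 j12 _ _ e); try lia.
    by move=> m' [->|->]; apply: IH' => //; lia.
  - exfalso; apply: (F_coll (m1:=m2) (m2:=m1) (lam := lam) (ltnW hl) _ a2 j21 _ _ (esym e)); try lia.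
    by move=> m' [->|->]; apply: IH' => //; lia.
  - by subst j2; split => //; apply: mshift_inj e.
have {}hsep := hsep hc.
case: (ltnP (n - t) r) => hr'; first exact: IH'.
have er : r = (n - t)%N by lia.
have jk : k \in index_iota (n - t)%N n.+1 by rewrite mem_index_iota; lia.
have /eqP := hsep m k vm jk; rewrite (qint0 _ hl ol pe) er.
by move/eqP.
Qed.

Definition Pl l (lam : nat -> nat) (t : nat) : 'Z_l := ((\sum_(1 <= s < t.+1) lam s)%N)%:R.

Lemma Gsum (lam : nat -> nat) a b : (a <= b)%N ->
  (\sum_(1 <= k < a.+1) lam (b - k).+1 + \sum_(1 <= s < (b - a).+1) lam s
   = \sum_(1 <= s < b.+1) lam s)%N.
Proof.
elim: a => [|a IH] ab; first by rewrite big_geq // subn0.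
rewrite -IH ?(ltnW ab) // (_ : (b - a = (b - a.+1).+1)%N); last by lia.
rewrite big_nat_recr //= [X in (_ = _ + X)%N]big_nat_recr //=.
lia.
Qed.

Lemma ment_mlam n l (lam : nat -> nat) a b : (a <= b <= n)%N ->
  ment (mlam n l lam) a b = Pl l lam b - Pl l lam (b - a).
Proof.
move=> /andP[ab bn]; case: a ab => [|a] ab.
  by rewrite ment_inv ?subn0 ?subrr // /valid ltnn.
have /pos_ex [p [e1 e2]] : valid n a.+1 b by rewrite /valid ab bn.
rewrite -e1 -e2 ment_p /mlam ffunE e1 e2 /Pl -(Gsum lam ab) natrD addrK.
by [].
Qed.

Lemma Pl_S l lam t : Pl l lam t.+1 = Pl l lam t + (lam t.+1)%:R.
Proof. by rewrite /Pl big_nat_recr //= natrD. Qed.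

Lemma mlam_MZ n l (lam : nat -> nat) i j : (1 <= i)%N -> (i <= j <= n)%N ->
  MZ (ment (mlam n l lam)) i j = (lam i)%:R.
Proof.
move=> i1 /andP[ij jn].
have L0 : forall a b, (b < a)%N -> ment (mlam n l lam) a b = 0.
  by move=> a b ba; rewrite ment_inv // /valid; lia.
suff H : forall s, (i + s <= n)%N -> MZ (ment (mlam n l lam)) i (i + s) = (lam i)%:R.
  have -> : j = (i + (j - i))%N by lia.
  by apply: H; lia.
elim=> [|s IH] hn.
  rewrite addn0 MZ_base // (L0 i i.-1) ?(L0 i.+1 i) ?subrr ?addr0; try lia.
  rewrite !ment_mlam; try lia.
  rewrite !subnn.
  case: i i1 {hn ij} => // i _ /=; rewrite Pl_S; ring.
rewrite addnS MZ_step //; last by lia.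
rewrite IH; last by lia.
rewrite !ment_mlam; try lia.
rewrite (_ : (i + s - i.-1 = s.+1)%N); last by lia.
rewrite (_ : ((i + s).+1 - i = s.+1)%N); last by lia.
rewrite (_ : ((i + s).+1 - i.+1 = s)%N); last by lia.
rewrite (_ : (i + s - i = s)%N); last by lia.
ring.
Qed.

Lemma uniqB n l (lam : nat -> nat) (m : Blab n l) :
  (forall r k, (1 <= r)%N -> (r <= k <= n)%N -> MZ (ment m) r k = (lam r)%:R) ->
  m = mlam n l lam.
Proof.
move=> hm.
pose D a b := ment m a b - ment (mlam n l lam) a b.
have hD : forall r k, (1 <= r)%N -> (r <= k <= n)%N -> MZ D r k = 0.
  move=> r k r1 rk.
  have := @MZ_lin l (ment (mlam n l lam)) (ment m) D r k.
  rewrite hm // mlam_MZ // => h.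
  have {h} := h (fun a b => ltac:(by rewrite /D addrC subrK)).
  by rewrite -{1}[(lam r)%:R]addr0 => /addrI <-.
have Dinv : forall a b, ~~ valid n a b -> D a b = 0.
  by move=> a b vab; rewrite /D !ment_inv // subrr.
have Z : forall s r, D r (r + s)%N = 0.
  elim=> [|s IHs] r; elim: r => [|r IHr].
  - by rewrite Dinv.
  - have [v|v] := boolP (valid n r.+1 (r.+1 + 0)); last by rewrite Dinv.
    have := hD r.+1 r.+1 isT ltac:(move: v; rewrite /valid; lia).
    rewrite MZ_base // /= (Dinv r.+1 r) ?(Dinv r.+2 r.+1); try (rewrite /valid; lia).
    rewrite addn0 in IHr; by rewrite subrr addr0 addn0 IHr subr0.
  - by rewrite Dinv.
  - have [v|v] := boolP (valid n r.+1 (r.+1 + s.+1)); last by rewrite Dinv.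
    have := hD r.+1 (r.+1 + s.+1)%N isT ltac:(move: v; rewrite /valid; lia).
    rewrite addnS MZ_step //; last by lia.
    rewrite hD //; last by move: v; rewrite /valid; lia.
    rewrite IHs /= (_ : (r.+1 + s = r + s.+1)%N) ?IHr; last by lia.
    rewrite (_ : ((r + s.+1).+1 = r.+2 + s)%N) ?IHs; last by lia.
    by rewrite subrr !add0r subr0.
apply: ment_ext => a b vab; apply/eqP; rewrite -subr_eq0; apply/eqP.
have := Z (b - a)%N a; rewrite subnKC //; move: vab; rewrite /valid; lia.
Qed.

Theorem proposition5p8 (n l : nat) (eps : algC) (lam : nat -> nat) (v : Vsp n l) :
  (1 <= n)%N -> (2 < l)%N -> odd l -> coprime l n.+1 ->
  l.-primitive_root eps ->
  (forall i, (1 <= i <= n)%N -> (lam i < l)%N) ->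
  ((forall i, (1 <= i <= n)%N -> Eop eps i v = 0) <->
     (exists c : algC, v = c *: bvec (0 : Blab n l)))
  /\
  ((forall i, (1 <= i <= n)%N -> Fop eps lam i v = 0) <->
     (exists c : algC, v = c *: bvec (mlam n l lam))).
Proof.
move=> n1 hl ol cop pe hlam.
split; split.
- move=> hE; exists (v 0); apply/ffunP => m; rewrite !ffunE.
  have [->|mn] := eqVneq m 0; first by rewrite /= mulr1n; exact: (esym (mulr1 _)).
  rewrite /= mulr0n scaler0.
  have [//|vm] := eqVneq (v m) 0.
  by rewrite (partA hl ol pe hE vm) eqxx in mn.
- move=> [c ->] i hi; rewrite /Eop; apply: big1 => m _; rewrite !ffunE.
  have [->|mn] := eqVneq m 0; last by rewrite /= mulr0n scaler0 scale0r.
  rewrite big1 ?scaler0 // => j _.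
  by rewrite /Nij !mval0 subrr /qint oppr0 subrr mul0r scale0r.
- move=> hF; exists (v (mlam n l lam)); apply/ffunP => m; rewrite !ffunE.
  have [->|mn] := eqVneq m (mlam n l lam); first by rewrite /= mulr1n; exact: (esym (mulr1 _)).
  rewrite /= mulr0n scaler0.
  have [//|vm] := eqVneq (v m) 0.
  suff : m = mlam n l lam by move=> e; rewrite e eqxx in mn.
  apply: uniqB => r k r1 rk.
  have := partB hl ol pe hF vm r1 rk.
  rewrite intrB (MZ_phi n) => /eqP; rewrite subr_eq0 => /eqP.
  exact.
- move=> [c ->] i hi; rewrite /Fop; apply: big1 => m _; rewrite !ffunE.
  have [->|mn] := eqVneq m (mlam n l lam); last by rewrite /= mulr0n scaler0 scale0r.
  rewrite big1_seq ?scaler0 // => j; rewrite mem_index_iota => /andP[ij jn].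
  have -> : qint eps (Mij n (mval (mlam n l lam)) i j - (lam i)%:Z) = 0.
    apply/eqP; rewrite (qint0 _ hl ol pe) intrB (MZ_phi n) subr_eq0; apply/eqP.
    apply: mlam_MZ; move: hi; lia.
  by rewrite scale0r.
Qed.
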